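(* Let $T$ be an $\mathcal O$-operator on a Lie algebra $\mathfrak g$ with respect to a representation $(V;\rho)$ and let $T_t=\sum_{i=0}^n\tau_it^i$ be an order $n$ deformation of $T$. Then $T_t$ is extendable if and only if the obstruction class $[\mathrm{Ob}]\in\mathcal H^2(V,\mathfrak g)$ is trivial, where $\mathrm{Ob}(u,v)=\sum_{i+j=n+1,\ i,j\ge1}\big([\tau_i(u),\tau_j(v)]-\tau_i(\rho(\tau_j(u))(v)-\rho(\tau_j(v))(u))\big)$.
   Context: An $\mathcal O$-operator: linear $T:V\to\mathfrak g$ with $[Tu,Tv]=T(\rho(Tu)(v)-\rho(Tv)(u))$. An order $n$ deformation of $T$ is $T_t=\sum_{i=0}^n\tau_it^i$ with $\tau_0=T$, $\tau_i\in\mathrm{Hom}(V,\mathfrak g)$, such that $\sum_{k+l=i,\,k,l\ge0}([\tau_ku,\tau_lv]-\tau_k(\rho(\tau_lu)(v)-\rho(\tau_lv)(u)))=0$ for all $u,v\in V$ and $0\le i\le n$ (i.e. the $\mathcal O$-operator identity holds modulo $t^{n+1}$). It is extendable if there is $\tau_{n+1}\in\mathrm{Hom}(V,\mathfrak g)$ such that $T_t+\tau_{n+1}t^{n+1}$ is an order $n+1$ deformation. $\mathrm{Ob}$ is a $2$-cocycle. $\mathcal H^k(V,\mathfrak g)$ is the Chevalley–Eilenberg cohomology of the Lie algebra $(V,[\cdot,\cdot]_T)$, $[u,v]_T=\rho(Tu)(v)-\rho(Tv)(u)$, with coefficients in the representation $\bar\rho(u)(x)=[Tu,x]+T\rho(x)(u)$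 on $\mathfrak g$; its coboundary is $d_{\bar\rho}f(u_1,\dots,u_{k+1})=\sum_{i}(-1)^{i+1}[Tu_i,f(\dots,\hat u_i,\dots)]+\sum_i(-1)^{i+1}T\rho(f(\dots,\hat u_i,\dots))(u_i)+\sum_{i<j}(-1)^{i+j}f([u_i,u_j]_T,u_1,\dots,\hat u_i,\dots,\hat u_j,\dots,u_{k+1})$. *)

(* Defs.v *)
From HB Require Import structures.
From mathcomp Require Import all_boot all_order all_algebra.
Set Implicit Arguments. Unset Strict Implicit. Unset Printing Implicit Defensive.
Import GRing.Theory.
Local Open Scope ring_scope.

Section OOps.
Variables (K : fieldType) (g V : lmodType K).

Definition is_lie_bracket (br : g -> g -> g) : Prop :=
  [/\ (forall (a : K) x y z, br (a *: x + y) z = a *: br x z + br y z),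
      (forall (a : K) x y z, br z (a *: x + y) = a *: br z x + br z y),
      (forall x, br x x = 0)
    & (forall x y z, br x (br y z) + br y (br z x) + br z (br x y) = 0)].

Definition is_representation (br : g -> g -> g) (rho : g -> V -> V) : Prop :=
  [/\ (forall (a : K) x y u, rho (a *: x + y) u = a *: rho x u + rho y u),
      (forall (a : K) x u w, rho x (a *: u + w) = a *: rho x u + rho x w)
    & (forall x y u, rho (br x y) u = rho x (rho y u) - rho y (rho x u))].

Definition is_O_operator (br : g -> g -> g) (rho : g -> V -> V)
    (T : {linear V -> g}) : Prop :=
  forall u v, br (T u) (T v) = T (rho (T u) v - rho (T v) u).

Definition is_order_deformation (br : g -> g -> g) (rho : g -> V -> V)
    (T : {linear V -> g}) (n : nat) (tau : nat -> {linear V -> g}) : Prop :=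
  tau 0%N = T /\
  forall i : nat, (i <= n)%N -> forall u v,
    \sum_(k < i.+1)
      (br (tau k u) (tau (i - k)%N v)
       - tau k (rho (tau (i - k)%N u) v - rho (tau (i - k)%N v) u)) = 0.

Definition extendable (br : g -> g -> g) (rho : g -> V -> V)
    (T : {linear V -> g}) (n : nat) (tau : nat -> {linear V -> g}) : Prop :=
  exists tau' : {linear V -> g},
    is_order_deformation br rho T n.+1
      (fun i => if i == n.+1 then tau' else tau i).

Definition bracketT (rho : g -> V -> V) (T : {linear V -> g}) (u v : V) : V :=
  rho (T u) v - rho (T v) u.

(** Coboundary d_{rhobar} of a 1-cochain f in Hom(V,g) (the formula of the
    paper with k = 1). *)
Definition dbar1 (br : g -> g -> g) (rho : g -> V -> V)
    (T : {linear V -> g}) (f : {linear V -> g}) (u1 u2 : V) : g :=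
  br (T u1) (f u2) - br (T u2) (f u1)
  + T (rho (f u2) u1) - T (rho (f u1) u2)
  - f (bracketT rho T u1 u2).

Definition Ob (br : g -> g -> g) (rho : g -> V -> V) (n : nat)
    (tau : nat -> {linear V -> g}) (u v : V) : g :=
  \sum_(1 <= i < n.+1)
    (br (tau i u) (tau (n.+1 - i)%N v)
     - tau i (rho (tau (n.+1 - i)%N u) v - rho (tau (n.+1 - i)%N v) u)).

Definition Ob_class_trivial (br : g -> g -> g) (rho : g -> V -> V)
    (T : {linear V -> g}) (n : nat) (tau : nat -> {linear V -> g}) : Prop :=
  exists xi : {linear V -> g}, forall u v, Ob br rho n tau u v = dbar1 br rho T xi u v.

End OOps.

(* Main.v *)
Require Import Defs.
From HB Require Import structures.
From mathcomp Require Import all_boot all_order all_algebra.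
Local Open Scope ring_scope.
Import GRing.Theory.
Set Implicit Arguments. Unset Strict Implicit.

Definition negf (K : fieldType) (g V : lmodType K) (t : {linear V -> g}) :=
  fun v => - t v.

Lemma negf_lin (K : fieldType) (g V : lmodType K) (t : {linear V -> g}) :
  linear (negf t).
Proof. by move=> a u v; rewrite /negf linearP opprD scalerN. Qed.

HB.instance Definition _ (K : fieldType) (g V : lmodType K) (t : {linear V -> g}) :=
  GRing.isLinear.Build K V g *:%R (negf t) (negf_lin t).

Lemma grp (G : zmodType) (a b c M d e : G) :
  a - (b - c) + (M + (-d - e)) = M + (a - d + c - b - e).
Proof.
rewrite addrCA; congr (_ + _); rewrite opprB !addrA; congr (_ - _).
by rewrite addrAC (addrAC a) (addrAC _ c).
Qed.

Section Aux.
Variables (K : fieldType) (g V : lmodType K).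
Variables (br : g -> g -> g) (rho : g -> V -> V) (T : {linear V -> g}).

Lemma br_anti : is_lie_bracket br -> forall x y, br x y = - br y x.
Proof.
move=> [] L R A _ x y.
have L1 : forall x y z, br (x + y) z = br x z + br y z.
  by move=> a b c; have := L 1 a b c; rewrite !scale1r.
have R1 : forall x y z, br z (x + y) = br z x + br z y.
  by move=> a b c; have := R 1 a b c; rewrite !scale1r.
have := A (x + y); rewrite L1 !R1 !A add0r addr0 => /eqP.
by rewrite addr_eq0 => /eqP.
Qed.

Lemma dbar1_neg : is_lie_bracket br -> is_representation br rho ->
  forall (t : {linear V -> g}) u v,
  dbar1 br rho T (negf t) u v = - dbar1 br rho T t u v.
Proof.
move=> [] L R _ _ [] rL _ _ t u v.
have R0 : forall z, br z 0 = 0.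
  move=> z; have := R 1 0 0 z; rewrite !scale1r addr0 => H.
  by apply: (addrI (br z 0)); rewrite addr0 -H.
have RN : forall z x, br z (- x) = - br z x.
  by move=> z x; rewrite -[- x]addr0 -scaleN1r R R0 addr0 scaleN1r.
have rho0 : forall w, rho 0 w = 0.
  move=> w; have := rL 1 0 0 w; rewrite !scale1r addr0 => H.
  by apply: (addrI (rho 0 w)); rewrite addr0 -H.
have rN : forall x w, rho (- x) w = - rho x w.
  by move=> x w; rewrite -[- x]addr0 -scaleN1r rL rho0 addr0 scaleN1r.
rewrite /dbar1 /negf !RN !rN !linearN /=.
by rewrite !opprD !opprK.
Qed.

End Aux.

Theorem theorem5p15 (K : fieldType) (g V : lmodType K)
    (br : g -> g -> g) (rho : g -> V -> V) (T : {linear V -> g})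
    (n : nat) (tau : nat -> {linear V -> g}) :
  is_lie_bracket br ->
  is_representation br rho ->
  is_O_operator br rho T ->
  is_order_deformation br rho T n tau ->
  (extendable br rho T n tau <-> Ob_class_trivial br rho T n tau).
Proof.
move=> Hbr Hrho _ [H0 Hdef].
set tt := fun (t : {linear V -> g}) i => if i == n.+1 then t else tau i.
have key : forall (t : {linear V -> g}) u v,
  \sum_(k < n.+2)
      (br (tt t k u) (tt t (n.+1 - k)%N v)
       - tt t k (rho (tt t (n.+1 - k)%N u) v - rho (tt t (n.+1 - k)%N v) u))
  = Ob br rho n tau u v + dbar1 br rho T t u v.
  move=> t u v.
  rewrite big_ord_recl big_ord_recr /= /tt /= subn0 subnn eqxx /= H0.
  set S := \sum_(i < n) _.
  have -> : S = Ob br rho n tau u v.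
    rewrite /S /Ob big_add1 /= big_mkord; apply: eq_bigr => i _.
    rewrite /bump /= add1n subSS eqSS (ltn_eqF (ltn_ord i)).
    by rewrite (ltn_eqF (_ : (n - i < n.+1)%N)) // ltnS leq_subr.
  rewrite /dbar1 /bracketT (br_anti Hbr (t u)) linearB /=.
  exact: grp.
have low : forall (t : {linear V -> g}) i, (i <= n)%N -> forall u v,
  \sum_(k < i.+1)
      (br (tt t k u) (tt t (i - k)%N v)
       - tt t k (rho (tt t (i - k)%N u) v - rho (tt t (i - k)%N v) u)) = 0.
  move=> t i Hi u v; apply: etrans (Hdef i Hi u v); apply: eq_bigr => k _.
  have Hk : (k <= n)%N by rewrite -ltnS (leq_trans (ltn_ord k)).
  have Hik : (i - k <= n)%N by rewrite (leq_trans (leq_subr _ _)).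
  by rewrite /tt (ltn_eqF (_ : (k < n.+1)%N)) // (ltn_eqF (_ : (i - k < n.+1)%N)).
split.
- move=> [t [_ Ht]]; exists (negf t) => u v.
  have := Ht n.+1 (leqnn _) u v; rewrite -/(tt t) key => /eqP.
  rewrite addr_eq0 => /eqP ->.
  by rewrite dbar1_neg.
- move=> [xi Hxi]; exists (negf xi); split; first by [].
  move=> i; rewrite leq_eqVlt => /orP [/eqP -> | Hi] u v.
    by rewrite -/(tt (negf xi)) key dbar1_neg // Hxi subrr.
  by rewrite -/(tt (negf xi)) low.
Qed.
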